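(* Let $M$ and $N$ be two quasianalytic weight sequences and let $(\omega^M_{j,k})_{j,k\in\mathbb N}$ be numbers as in the representation formula for $M$. Assume $\sup_{k\in\mathbb N_{>0}}n_k^{1/k}=+\infty$ (Roumieu case) resp. $\lim_{k\to+\infty}n_k^{1/k}=+\infty$ (Beurling case). Then there exist $\mathbf F=(F_j)_{j\in\mathbb N}\in\Lambda^1_{\{N\}}$ resp. $\mathbf F\in\Lambda^1_{(N)}$ and $a_0\in(0,1]$ such that $$\limsup_{k\to+\infty}\Big|\sum_{j=0}^{k-1}\omega^M_{j,k}F_ja^j\Big|=+\infty\quad\text{for all }0<a\le a_0.$$
   Context: For a sequence $M=(M_p)_{p\in\mathbb N}$ of positive reals write $m_p:=M_p/p!$ (and $n_p:=N_p/p!$). $M$ is a weight sequence if $1=M_0\le M_1$, $M_p^2\le M_{p-1}M_{p+1}$ for all $p\ge1$, and $\liminf_{p\to\infty}m_p^{1/p}>0$; it is quasianalytic if $\sum_{p\ge1}M_{p-1}/M_p=+\infty$. For $\mathbf b=(b_\alpha)_{\alpha\in\mathbb N^r}\in\mathbb C^{\mathbb N^r}$ and $h>0$ put $|\mathbf b|^N_h:=\sup_{\alpha}|b_\alpha|/(h^{|\alpha|}n_{|\alpha|})$; $\Lambda^r_{\{N\}}:=\{\mathbf b:\exists h>0,\ |\mathbf b|^N_h<\infty\}$ and $\Lambda^r_{(N)}:=\{\mathbf b:\forall h>0,\ |\mathbf b|^N_h<\infty\}$. Representation formula (Thilliez): for every quasianalytic weight sequence $M$ there exist numbers $(\omega^M_{j,k})_{j,k\in\mathbb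 N}$ such that $\lim_{k\to+\infty}\omega^M_{j,k}=1$ for every $j$, and for every germ $f$ at $0\in\mathbb R$ of a smooth function $f$ on some $(-1/k,1/k)$ satisfying: for each compact $K$ there is $h>0$ with $\sup_{j,x\in K}|f^{(j)}(x)|/(h^jM_j)<\infty$, one has $f(x)=\lim_{k}\sum_{j=0}^{k-1}\omega^M_{j,k}\frac{f^{(j)}(0)}{j!}x^j$ for all $x>0$ small enough. *)

(* Defs.v *)
From Stdlib Require Import Reals Lra Arith Factorial.
Open Scope R_scope.

Fixpoint sumR (g : nat -> R) (k : nat) : R :=
  match k with
  | O => 0
  | S k' => sumR g k' + g k'
  end.

Definition mseq (M : nat -> R) (p : nat) : R := M p / INR (fact p).

Definition weight_sequence (M : nat -> R) : Prop :=
  (forall p, 0 < M p) /\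
  M 0%nat = 1 /\ 1 <= M 1%nat /\
  (forall p, (1 <= p)%nat -> M p ^ 2 <= M (p - 1)%nat * M (p + 1)%nat) /\
  (* liminf_{p -> oo} m_p^{1/p} > 0 *)
  (exists c, 0 < c /\ exists P, forall p, (P <= p)%nat -> (1 <= p)%nat ->
       c <= Rpower (mseq M p) (/ INR p)).

Definition quasianalytic (M : nat -> R) : Prop :=
  cv_infty (sumR (fun q => M q / M (S q))).

(* Complex numbers as pairs (real part, imaginary part) *)
Definition Cmod (z : R * R) : R := sqrt (fst z ^ 2 + snd z ^ 2).

Definition seminorm_finite (N : nat -> R) (h : R) (b : nat -> R * R) : Prop :=
  exists C, forall j, Cmod (b j) <= C * (h ^ j * mseq N j).

Definition Lambda_Roumieu (N : nat -> R) (b : nat -> R * R) : Prop :=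
  exists h, 0 < h /\ seminorm_finite N h b.

Definition Lambda_Beurling (N : nat -> R) (b : nat -> R * R) : Prop :=
  forall h, 0 < h -> seminorm_finite N h b.

Definition smooth_with_derivs (r : R) (f : R -> R) (D : nat -> R -> R) : Prop :=
  (forall x, - r < x < r -> D 0%nat x = f x) /\
  (forall j x, - r < x < r -> derivable_pt_lim (D j) x (D (S j) x)).

Definition class_bound (M : nat -> R) (r : R) (D : nat -> R -> R) : Prop :=
  forall K : R -> Prop, compact K -> (forall x, K x -> - r < x < r) ->
    exists h, 0 < h /\ exists C, forall j x, K x -> Rabs (D j x) <= C * (h ^ j * M j).

(* The numbers omega satisfy Thilliez's representation formula for M *)
Definition representation_numbers (M : nat -> R) (omega : nat -> nat -> R) : Prop :=
  (forall j, Un_cv (fun k => omega j k) 1) /\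
  (forall (k0 : nat) (f : R -> R) (D : nat -> R -> R),
      (0 < k0)%nat ->
      smooth_with_derivs (/ INR k0) f D ->
      class_bound M (/ INR k0) D ->
      exists delta, 0 < delta /\ forall x, 0 < x < delta ->
        Un_cv (fun k => sumR (fun j => omega j k * (D j 0 / INR (fact j)) * x ^ j) k) (f x)).

Definition omega_sum (omega : nat -> nat -> R) (F : nat -> R * R) (a : R) (k : nat) : R * R :=
  (sumR (fun j => omega j k * fst (F j) * a ^ j) k,
   sumR (fun j => omega j k * snd (F j) * a ^ j) k).

Definition limsup_infty (u : nat -> R) : Prop :=
  forall B K, exists k, (K <= k)%nat /\ B < u k.

(* Main.v *)
Require Import Defs.
From Stdlib Require Import Reals Lra Lia ClassicalEpsilon.
Open Scope R_scope.

Lemma sumR_zero g k : (forall i, (i<k)%nat -> g i = 0) -> sumR g k = 0.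
Proof.
  induction k; simpl; intros H; [reflexivity|].
  rewrite IHk by (intros; apply H; lia). rewrite H by lia. ring.
Qed.

Lemma sumR_nonneg g k : (forall i, (i<k)%nat -> 0 <= g i) -> 0 <= sumR g k.
Proof.
  induction k; simpl; intros H; [lra|].
  assert (0 <= sumR g k) by (apply IHk; intros; apply H; lia).
  assert (0<=g k) by (apply H; lia). lra.
Qed.

Lemma sumR_ge g k i0 : (forall i, (i<k)%nat -> 0 <= g i) -> (i0 < k)%nat -> g i0 <= sumR g k.
Proof.
  induction k; intros H Hi; [lia|]. simpl.
  destruct (Nat.eq_dec i0 k) as [->|Hne].
  - assert (0 <= sumR g k) by (apply sumR_nonneg; intros; apply H; lia). lra.
  - assert (g i0 <= sumR g k) by (apply IHk; [intros; apply H; lia | lia]).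
    assert (0 <= g k) by (apply H; lia). lra.
Qed.

Lemma Cmod_real x : Cmod (x,0) = Rabs x.
Proof.
  unfold Cmod; simpl. replace (x * (x * 1) + 0 * (0 * 1)) with (Rsqr x) by (unfold Rsqr; ring).
  apply sqrt_Rsqr_abs.
Qed.

Lemma rp_pow x j c : 0 < x -> (0<j)%nat -> 0 <= c -> c < Rpower x (/INR j) -> c^j <= x.
Proof.
  intros Hx Hj Hc H.
  assert (Hj' : INR j <> 0) by (apply not_0_INR; lia).
  assert (E : x = (Rpower x (/ INR j)) ^ j).
  { rewrite <- Rpower_pow by (unfold Rpower; apply exp_pos).
    rewrite Rpower_mult. replace (/ INR j * INR j) with 1 by (field; auto).
    rewrite Rpower_1; auto. }
  rewrite E. apply pow_incr. lra.
Qed.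

Lemma Rinv_lt_cancel a b : 0 < a -> /a < /b -> b < a.
Proof.
  intros Ha H. destruct (Rlt_or_le 0 b) as [Hb|Hb].
  - rewrite <- (Rinv_inv a), <- (Rinv_inv b). apply Rinv_lt_contravar; auto.
    apply Rmult_lt_0_compat; apply Rinv_0_lt_compat; auto.
  - lra.
Qed.

Lemma INR_unb x : exists n, x < INR n.
Proof.
  assert (Hp : 0 < / (Rabs x + 1)) by (apply Rinv_0_lt_compat; pose proof (Rabs_pos x); lra).
  destruct (archimed_cor1 _ Hp) as [N [HN1 HN2]]. exists N.
  assert (0 < INR N) by (apply lt_0_INR; lia).
  apply Rinv_lt_cancel in HN1; auto. pose proof (Rle_abs x); lra.
Qed.

Lemma INR_lt_pow2 n : INR n < 2 ^ n.
Proof.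
  induction n; [simpl; lra|]. rewrite S_INR; cbn [pow].
  assert (1 <= 2 ^ n) by (apply pow_R1_Rle; lra). lra.
Qed.

Lemma unbounded_shift (f : nat -> R) : (forall B, exists k, B < f k) -> forall B K, exists k, (K < k)%nat /\ B < f k.
Proof.
  intros H. assert (P: forall K B, exists k, (K <= k)%nat /\ B < f k).
  { induction K; intros B.
    - destruct (H B) as [k Hk]; exists k; split; [lia|auto].
    - destruct (IHK (Rmax B (f K))) as [k [Hk1 Hk2]]. exists k. split.
      + destruct (Nat.eq_dec k K) as [->|]; [|lia]. pose proof (Rmax_r B (f K)); lra.
      + pose proof (Rmax_l B (f K)); lra. }
  intros B K. destruct (P (S K) B) as [k [? ?]]. exists k; split; [lia|auto].
Qed.

Lemma omega_common (omega : nat -> nat -> R) : (forall j, Un_cv (omega j) 1) ->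
  forall j, exists k, (j<k)%nat /\ forall i, (i<=j)%nat -> 1/2 <= omega i k.
Proof.
  intros Hom.
  assert (P: forall j, exists Nn, forall i k, (i<=j)%nat -> (Nn<=k)%nat -> 1/2 <= omega i k).
  { induction j.
    - destruct (Hom 0%nat (1/2)) as [Nn HN]; [lra|]. exists Nn. intros i k Hi Hk.
      assert (i=0%nat) by lia; subst. specialize (HN k ltac:(lia)). unfold R_dist in HN.
      apply Rabs_def2 in HN. lra.
    - destruct IHj as [N1 H1]. destruct (Hom (S j) (1/2)) as [N2 H2]; [lra|].
      exists (max N1 N2). intros i k Hi Hk. destruct (Nat.eq_dec i (S j)) as [->|].
      + specialize (H2 k ltac:(lia)). unfold R_dist in H2. apply Rabs_def2 in H2. lra.
      + apply H1; lia. }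
  intros j. destruct (P j) as [Nn HN]. exists (max Nn (S j)). split; [lia|].
  intros; apply HN; lia.
Qed.

Lemma core (N : nat -> R) (omega : nat -> nat -> R) :
  (forall p, 0 < N p) -> (forall j, Un_cv (omega j) 1) ->
  (forall c K, exists j, (K<j)%nat /\ c < Rpower (mseq N j) (/INR j)) ->
  exists F, Lambda_Beurling N F /\ exists a0, 0 < a0 <= 1 /\
    forall a, 0 < a <= a0 -> limsup_infty (fun k => Cmod (omega_sum omega F a k)).
Proof.
  intros HN Hom Hsel.
  assert (Hmpos: forall p, 0 < mseq N p).
  { intros p; unfold mseq; apply Rdiv_lt_0_compat; [apply HN| apply INR_fact_lt_0]. }
  pose (selJ := fun l K => proj1_sig (constructive_indefinite_description _ (Hsel ((INR l + 1)^2) K))).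
  assert (HselJ: forall l K, (K < selJ l K)%nat /\
            (INR l + 1)^2 < Rpower (mseq N (selJ l K)) (/ INR (selJ l K))).
  { intros; unfold selJ; destruct (constructive_indefinite_description _ _) as [? ?]; simpl; auto. }
  pose proof (omega_common omega Hom) as Hoc.
  pose (selK := fun j => proj1_sig (constructive_indefinite_description _ (Hoc j))).
  assert (HselK: forall j, (j < selK j)%nat /\ forall i, (i<=j)%nat -> 1/2 <= omega i (selK j)).
  { intros; unfold selK; destruct (constructive_indefinite_description _ _) as [? ?]; simpl; auto. }
  pose (JK := fix JK (l:nat) : nat*nat := match l with
     | O => (selJ O O, selK (selJ O O))
     | S l' => (selJ (S l') (snd (JK l')), selK (selJ (S l') (snd (JK l')))) end).
  assert (JK_0 : JK O = (selJ O O, selK (selJ O O))) by reflexivity.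
  assert (JK_S : forall l, JK (S l) = (selJ (S l) (snd (JK l)), selK (selJ (S l) (snd (JK l))))) by reflexivity.
  clearbody JK.
  pose (J := fun l => fst (JK l)). pose (Kf := fun l => snd (JK l)).
  assert (HJ1: forall l, (0 < J l)%nat /\ (INR l+1)^2 < Rpower (mseq N (J l)) (/INR (J l))).
  { intros [|l]; unfold J; [rewrite JK_0 | rewrite JK_S]; cbn [fst snd];
      [destruct (HselJ 0%nat 0%nat) | destruct (HselJ (S l) (snd (JK l)))]; split; auto; lia. }
  assert (HK1: forall l, (J l < Kf l)%nat /\ forall i, (i <= J l)%nat -> 1/2 <= omega i (Kf l)).
  { intros [|l]; unfold J, Kf; [rewrite JK_0 | rewrite JK_S]; cbn [fst snd]; apply HselK. }
  assert (HKJ: forall l, (Kf l < J (S l))%nat).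
  { intros l; unfold J, Kf; rewrite JK_S; cbn [fst snd]; apply HselJ. }
  clearbody J Kf.
  assert (Jmono: forall l m, (l < m)%nat -> (J l < J m)%nat).
  { intros l m H; induction H.
    - specialize (HKJ l); destruct (HK1 l) as [? _]; lia.
    - specialize (HKJ m); destruct (HK1 m) as [? _]; lia. }
  assert (Jinj: forall l m, J l = J m -> l = m).
  { intros l m E; destruct (Nat.lt_trichotomy l m) as [H|[H|H]]; auto;
      apply Jmono in H; lia. }
  assert (Jge: forall l, (l <= J l)%nat).
  { induction l. lia. pose proof (Jmono l (S l) ltac:(lia)); lia. }
  pose (F := fun j => match excluded_middle_informative (exists l, J l = j) with
     | left H => (mseq N j / (INR (proj1_sig (constructive_indefinite_description _ H)) + 1)^j, 0)
     | right _ => (0,0) end).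
  assert (HF: forall j, (exists l, J l = j /\ F j = (mseq N j / (INR l + 1)^j, 0)) \/
                        ((forall l, J l <> j) /\ F j = (0,0))).
  { intros j. unfold F. destruct (excluded_middle_informative _) as [H|H].
    - left. destruct (constructive_indefinite_description _ H) as [l Hl]. simpl. exists l; auto.
    - right. split; auto. intros l E; apply H; eauto. }
  clearbody F.
  exists F. split.
  - intros h Hh. destruct (archimed_cor1 h Hh) as [L [HL1 HL2]].
    exists ((1 + /h)^(J L)). intros j.
    assert (HC1 : 1 <= 1 + / h) by (pose proof (Rinv_0_lt_compat h Hh); lra).
    destruct (HF j) as [[l [Ej EF]] | [_ EF]]; rewrite EF, Cmod_real.
    + assert (Hl1 : 1 <= INR l + 1) by (pose proof (pos_INR l); lra).
      assert (Hpl : 0 < (INR l + 1) ^ j) by (apply pow_lt; lra).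
      rewrite Rabs_right.
      2: { apply Rle_ge, Rlt_le, Rdiv_lt_0_compat; auto. }
      assert (E : mseq N j / (INR l + 1)^j = (/((INR l+1)*h))^j * (h^j * mseq N j)).
      { rewrite pow_inv, Rpow_mult_distr. field. split; [apply pow_nonzero; lra | lra]. }
      rewrite E. apply Rmult_le_compat_r.
      { apply Rmult_le_pos; [apply pow_le; lra | apply Rlt_le, Hmpos]. }
      assert (Hq0 : 0 <= /((INR l+1)*h)) by (apply Rlt_le, Rinv_0_lt_compat, Rmult_lt_0_compat; lra).
      destruct (Compare_dec.le_lt_dec L l) as [HLl|HLl].
      * apply Rle_trans with (1 ^ j); [| rewrite pow1; apply pow_R1_Rle; auto].
        apply pow_incr. split; auto.
        assert (HLp : 0 < INR L) by (apply lt_0_INR; lia).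
        assert (1 < INR L * h).
        { apply Rmult_lt_compat_l with (r := INR L) in HL1; auto.
          rewrite Rinv_r in HL1; lra. }
        assert (INR L <= INR l) by (apply le_INR; lia).
        rewrite <- Rinv_1. apply Rinv_le_contravar; [lra|]. nra.
      * apply Rle_trans with ((1 + /h)^j).
        -- apply pow_incr. split; auto.
           apply Rle_trans with (/h); [|lra].
           apply Rinv_le_contravar; [lra|]. nra.
        -- apply Rle_pow; auto. rewrite <- Ej. apply Nat.lt_le_incl, Jmono; auto.
    + rewrite Rabs_R0. apply Rmult_le_pos; [apply pow_le; lra|].
      apply Rmult_le_pos; [apply pow_le; lra | apply Rlt_le, Hmpos].
  - exists 1. split; [lra|]. intros a [Ha0 Ha1] B K0.
    destruct (INR_unb (Rmax (2/a) (2*B))) as [n1 Hn1].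
    pose proof (Rmax_l (2/a) (2*B)). pose proof (Rmax_r (2/a) (2*B)).
    set (l := max n1 K0).
    assert (Hln : INR n1 <= INR l) by (apply le_INR; lia).
    destruct (HK1 l) as [HJK Hom2].
    exists (Kf l). split; [pose proof (Jge l); lia|].
    unfold omega_sum. rewrite (sumR_zero (fun j => omega j (Kf l) * snd (F j) * a ^ j)).
    2: { intros i _. destruct (HF i) as [[m [_ EF]] | [_ EF]]; rewrite EF; simpl; ring. }
    rewrite Cmod_real. eapply Rlt_le_trans; [| apply Rle_abs].
    set (g := fun j => omega j (Kf l) * fst (F j) * a ^ j).
    apply Rlt_le_trans with (g (J l)).
    2: { apply sumR_ge; auto. intros i Hi. unfold g.
         destruct (HF i) as [[m [Em EF]] | [_ EF]]; rewrite EF; cbn [fst].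
         - assert (Hml : (m <= l)%nat).
           { destruct (Compare_dec.le_lt_dec m l); auto. exfalso.
             assert (J (S l) <= J m)%nat.
             { destruct (Nat.eq_dec m (S l)) as [->|]; [lia|]. apply Nat.lt_le_incl, Jmono; lia. }
             specialize (HKJ l). lia. }
           assert (i <= J l)%nat.
           { rewrite <- Em. destruct (Nat.eq_dec m l) as [->|]; [lia|]. apply Nat.lt_le_incl, Jmono; lia. }
           specialize (Hom2 i H1).
           apply Rmult_le_pos; [apply Rmult_le_pos; [lra|] | apply pow_le; lra].
           apply Rlt_le, Rdiv_lt_0_compat; [auto | apply pow_lt; pose proof (pos_INR m); lra].
         - ring_simplify. lra. }
    unfold g. set (j := J l).
    destruct (HF j) as [[m [Em EF]] | [Hno _]]; [| exfalso; apply (Hno l); reflexivity].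
    apply Jinj in Em. subst m. rewrite EF. cbn [fst].
    destruct (HJ1 l) as [Hj0 Hrp]. fold j in Hj0, Hrp.
    assert (Hl1 : 1 <= INR l + 1) by (pose proof (pos_INR l); lra).
    set (P := (INR l + 1)^j).
    assert (HP : 0 < P) by (apply pow_lt; lra).
    assert (Hm : P * P <= mseq N j).
    { unfold P. rewrite <- Rpow_mult_distr. apply rp_pow; auto.
      apply Rmult_le_pos; lra. replace ((INR l + 1) * (INR l + 1)) with ((INR l + 1)^2) by ring. auto. }
    assert (Hq : P <= mseq N j / P).
    { apply Rmult_le_reg_r with P; auto. unfold Rdiv. rewrite Rmult_assoc, Rinv_l; lra. }
    assert (Hla : 2 <= (INR l + 1) * a).
    { assert (2 / a < INR l) by lra.
      assert (2 < INR l * a).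
      { apply Rmult_lt_reg_r with (/a); [apply Rinv_0_lt_compat; lra|].
        field_simplify; lra. }
      nra. }
    assert (H2j : 2 ^ j <= P * a ^ j).
    { unfold P. rewrite <- Rpow_mult_distr. apply pow_incr; lra. }
    assert (Hjl : INR l <= INR j) by (apply le_INR, Jge).
    pose proof (INR_lt_pow2 j).
    specialize (Hom2 j (Nat.le_refl _)).
    assert (Haj : 0 < a ^ j) by (apply pow_lt; lra).
    assert (P * a^j <= mseq N j / P * a^j) by (apply Rmult_le_compat_r; lra).
    assert (1/2 * (mseq N j / P * a^j) <= omega j (Kf l) * (mseq N j / P) * a ^ j).
    { rewrite Rmult_assoc. apply Rmult_le_compat_r; [|lra]. nra. }
    lra.
Qed.

Theorem mainTheorem2 (M N : nat -> R) (omega : nat -> nat -> R) :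
  weight_sequence M -> quasianalytic M ->
  weight_sequence N -> quasianalytic N ->
  representation_numbers M omega ->
  (* Roumieu case *)
  ((forall B, exists k, (0 < k)%nat /\ B < Rpower (mseq N k) (/ INR k)) ->
   exists F : nat -> R * R, Lambda_Roumieu N F /\
     exists a0, 0 < a0 <= 1 /\
       forall a, 0 < a <= a0 -> limsup_infty (fun k => Cmod (omega_sum omega F a k)))
  /\
  (* Beurling case *)
  ((forall B, exists K, forall k, (K <= k)%nat -> (0 < k)%nat ->
        B < Rpower (mseq N k) (/ INR k)) ->
   exists F : nat -> R * R, Lambda_Beurling N F /\
     exists a0, 0 < a0 <= 1 /\
       forall a, 0 < a <= a0 -> limsup_infty (fun k => Cmod (omega_sum omega F a k))).
Proof.
  intros _ _ [HNpos _] _ [Hom _]. split.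
  - intros HR.
    assert (Hsel : forall c K, exists j, (K<j)%nat /\ c < Rpower (mseq N j) (/INR j)).
    { apply (unbounded_shift (fun j => Rpower (mseq N j) (/INR j))).
      intros B. destruct (HR B) as [k [_ Hk]]. eauto. }
    destruct (core N omega HNpos Hom Hsel) as [F [HF Hrest]].
    exists F. split; auto. exists 1. split; [lra|]. apply HF. lra.
  - intros HB.
    assert (Hsel : forall c K, exists j, (K<j)%nat /\ c < Rpower (mseq N j) (/INR j)).
    { intros c K. destruct (HB c) as [K1 HK1]. exists (max K1 (S K)).
      split; [lia|]. apply HK1; lia. }
    exact (core N omega HNpos Hom Hsel).
Qed.
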